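(* Let $\operatorname{R}_3=\{a_0,a_1,a_2\}$ be the dihedral quandle of order $3$, with $a_ia_j=a_{2j-i \pmod 3}$. Then the set of non-zero idempotents of $\mathbb{Z}[\operatorname{R}_3]$ is $I(\mathbb{Z}[\operatorname{R}_3])=\{a_0,a_1,a_2\}$.
   Context: For a quandle $Q$, the quandle ring $\mathbb{Z}[Q]$ is the free abelian group with basis $Q$, with multiplication $\big(\sum_i\alpha_i q_i\big)\big(\sum_j\beta_j q_j\big)=\sum_{i,j}\alpha_i\beta_j (q_iq_j)$. $I(\mathbb{Z}[Q])$ denotes the set of non-zero elements $w$ with $w^2=w$. *)

(* Defs.v *)
From mathcomp Require Import all_boot all_order all_algebra.
Set Implicit Arguments. Unset Strict Implicit. Unset Printing Implicit Defensive.
Import GRing.Theory.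
Local Open Scope ring_scope.

Notation R3 := 'I_3.
Definition r3op (i j : R3) : R3 := inord ((2 * j + 2 * i) %% 3)%N.
(* note: -i = 2i mod 3, so 2j - i = 2j + 2i mod 3 *)

(* Quandle ring Z[R_3]: elements are finitely supported Z-combinations,
   represented as functions R3 -> int (coefficient of a_i). *)
Notation ZR3 := {ffun 'I_3 -> int}.

Definition basis (i : R3) : ZR3 := [ffun k => (k == i)%:R].

Definition qmul (u v : ZR3) : ZR3 :=
  [ffun k => \sum_(i : R3) \sum_(j : R3) u i * v j * basis (r3op i j) k].

Definition idempotentsR3 : ZR3 -> Prop := fun w => w != 0 /\ qmul w w = w.

(* Main.v *)
Require Import Defs.
From mathcomp Require Import all_boot all_order all_algebra zify ring lra.
Import GRing.Theory.
Local Open Scope ring_scope.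

Definition o0 : 'I_3 := ord0.
Definition o1 : 'I_3 := Ordinal (isT : (1 < 3)%N).
Definition o2 : 'I_3 := Ordinal (isT : (2 < 3)%N).

Lemma sum3 (F : 'I_3 -> int) : \sum_(i < 3) F i = F o0 + F o1 + F o2.
Proof.
rewrite !big_ord_recr big_ord0 /= add0r.
by congr (F _ + F _ + F _); apply: val_inj.
Qed.

Lemma ord3 (k : 'I_3) : k = o0 \/ k = o1 \/ k = o2.
Proof.
case: k => [[|[|[|n]]] Hk]; [left|right;left|right;right|by []]; exact: val_inj.
Qed.

Lemma r3opE (k i j : 'I_3) : (k == r3op i j) = (val k == (2 * j + 2 * i) %% 3)%N.
Proof. by rewrite -val_eqE /= /r3op inordK // ltn_pmod. Qed.

Lemma coef (w : ZR3) (k : 'I_3) : qmul w w k =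
  \sum_(i < 3) \sum_(j < 3) w i * w j * ((val k == (2 * j + 2 * i) %% 3)%N%:R).
Proof. rewrite /qmul ffunE; apply: eq_bigr => i _; apply: eq_bigr => j _; by rewrite ffunE r3opE. Qed.

Lemma c0 (w : ZR3) : qmul w w o0 = w o0 ^+ 2 + 2 * w o1 * w o2.
Proof. rewrite coef !sum3 /=; ring. Qed.
Lemma c1 (w : ZR3) : qmul w w o1 = w o1 ^+ 2 + 2 * w o0 * w o2.
Proof. rewrite coef !sum3 /=; ring. Qed.
Lemma c2 (w : ZR3) : qmul w w o2 = w o2 ^+ 2 + 2 * w o0 * w o1.
Proof. rewrite coef !sum3 /=; ring. Qed.

Lemma wE (w v : ZR3) : w o0 = v o0 -> w o1 = v o1 -> w o2 = v o2 -> w = v.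
Proof. by move=> h0 h1 h2; apply/ffunP => k; case: (ord3 k) => [->|[->|->]]. Qed.

Lemma solve (x y z : int) :
  x ^+ 2 + 2 * y * z = x -> y ^+ 2 + 2 * x * z = y -> z ^+ 2 + 2 * x * y = z ->
  (x = 0 /\ y = 0 /\ z = 0) \/ (x = 1 /\ y = 0 /\ z = 0) \/
  (x = 0 /\ y = 1 /\ z = 0) \/ (x = 0 /\ y = 0 /\ z = 1).
Proof.
move=> e0 e1 e2.
have f01 : (x - y) * (x + y - 2 * z - 1) = (x ^+ 2 + 2 * y * z - x) - (y ^+ 2 + 2 * x * z - y) by ring.
have f12 : (y - z) * (y + z - 2 * x - 1) = (y ^+ 2 + 2 * x * z - y) - (z ^+ 2 + 2 * x * y - z) by ring.
have f02 : (x - z) * (x + z - 2 * y - 1) = (x ^+ 2 + 2 * y * z - x) - (z ^+ 2 + 2 * x * y - z) by ring.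
rewrite e0 e1 e2 !subrr in f01 f12 f02.
have L : (x = y /\ y = z) \/ (x = y /\ z = x + 1) \/ (x = z /\ y = x + 1) \/ (y = z /\ x = y + 1).
  move: f01 f12 f02 => /eqP; rewrite mulf_eq0 => /orP[] /eqP h1 /eqP; rewrite mulf_eq0 => /orP[] /eqP h2 /eqP;
    rewrite mulf_eq0 => /orP[] /eqP h3; lia.
case: L => [[hy hz]|[[hy hz]|[[hz hy]|[hz hx]]]].
- rewrite -hz -hy in e0 *; have : x * (3 * x - 1) = 0 by rewrite -[RHS](subrr x) -{3}e0; ring.
  move/eqP; rewrite mulf_eq0 => /orP[] /eqP h; lia.
- rewrite hz -hy in e0 *; have : x * (3 * x + 1) = 0 by rewrite -[RHS](subrr x) -{3}e0; ring.
  move/eqP; rewrite mulf_eq0 => /orP[] /eqP h; lia.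
- rewrite hy -hz in e0 *; have : x * (3 * x + 1) = 0 by rewrite -[RHS](subrr x) -{3}e0; ring.
  move/eqP; rewrite mulf_eq0 => /orP[] /eqP h; lia.
- rewrite hx -hz in e1 *; have : y * (3 * y + 1) = 0 by rewrite -[RHS](subrr y) -{3}e1; ring.
  move/eqP; rewrite mulf_eq0 => /orP[] /eqP h; lia.
Qed.

Theorem proposition4p3 (w : ZR3) :
  idempotentsR3 w <-> exists i : R3, w = basis i.
Proof.
split.
- case=> nz H.
  have e0 := congr1 (fun f : ZR3 => f o0) H.
  have e1 := congr1 (fun f : ZR3 => f o1) H.
  have e2 := congr1 (fun f : ZR3 => f o2) H.
  move: e0 e1 e2 => /= ; rewrite c0 c1 c2 => e0 e1 e2.
  case: (solve _ _ _ e0 e1 e2) => [[h0 [h1 h2]]|[[h0 [h1 h2]]|[[h0 [h1 h2]]|[h0 [h1 h2]]]]].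
  + by case/negP: nz; apply/eqP; apply: wE; rewrite ffunE.
  + by exists o0; apply: wE; rewrite ffunE.
  + by exists o1; apply: wE; rewrite ffunE.
  + by exists o2; apply: wE; rewrite ffunE.
- case=> i ->; split.
  + apply/negP => /eqP/ffunP/(_ i); by rewrite !ffunE eqxx.
  + case: (ord3 i) => [->|[->|->]]; apply: wE; rewrite ?c0 ?c1 ?c2 !ffunE //.
Qed.
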